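(* Let $a>0$, $b>0$, $c>0$, $P>0$, $\mu>0$ be constants and set $\lambda_a=ac$, $\tilde\lambda_a=a(b+c)$. For $\gamma>0$ define $$\Delta(\gamma)=\frac{e^{\gamma P/\lambda_a}-1}{e^{\gamma P/\tilde\lambda_a}-1},\qquad \hat\Delta(\gamma)=\exp\!\Big(\gamma P\,\frac{\tilde\lambda_a-\lambda_a}{\tilde\lambda_a\lambda_a}\Big),$$ and for a positive function $D$ on $(0,\infty)$ let $$J[D]=\int_0^{\infty}\Big(1-\frac{ab}{\gamma P}\,D(\gamma)^{-c/b}\big(e^{\gamma P/(a(b+c))}-1\big)\Big)\frac{1}{\mu}e^{-\gamma/\mu}\,d\gamma.$$ Then $\Delta(\gamma)>\hat\Delta(\gamma)$ for every $\gamma>0$, and $$J[\hat\Delta]=1+\frac{ab}{P\mu}\ln\!\Big(\frac{a(b+c)}{a(b+c)+P\mu}\Big)<J[\Delta].$$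
   Context: In the paper, $a=l_{rw}\theta_r$ (path loss to the warden times $\theta_r=\sum_n\beta_r^n$, the total reflection amplitude-squared of the STAR-RIS), $b=\varpi_b=\mathbf w_b^H\mathbf w_b$, $c=\varpi_c=\mathbf w_c^H\mathbf w_c$, $P=P_j^{\max}$, and $\mu=\lambda_{rw}=\|\boldsymbol\Theta_t\mathbf h_{rc}^*\|_2^2$; the quantity $\gamma$ is exponentially distributed with mean $\mu$. $J[\Delta]$ is the (asymptotic) average minimum detection error probability $\overline P^*_{ea}$ of the warden and $J[\hat\Delta]=\hat P^*_{ea}$ is its lower bound used as the covertness constraint. *)

(* Defs.v *)
From Stdlib Require Import Reals.
From Coquelicot Require Import Coquelicot.
Open Scope R_scope.

Definition lam_a (a c : R) : R := a * c.
Definition lamt_a (a b c : R) : R := a * (b + c).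

Definition DeltaF (a b c P : R) (g : R) : R :=
  (exp (g * P / lam_a a c) - 1) / (exp (g * P / lamt_a a b c) - 1).

Definition Delta_hat (a b c P : R) (g : R) : R :=
  exp (g * P * ((lamt_a a b c - lam_a a c) / (lamt_a a b c * lam_a a c))).

(* integrand of J[D]; D(g)^(-c/b) is Rpower (D g) (-c/b) (D positive) *)
Definition J_integrand (a b c P mu : R) (D : R -> R) (g : R) : R :=
  (1 - a * b / (g * P) * Rpower (D g) (- c / b) * (exp (g * P / (a * (b + c))) - 1))
  * (1 / mu * exp (- g / mu)).

Definition J_is (a b c P mu : R) (D : R -> R) (v : R) : Prop :=
  is_RInt_gen (J_integrand a b c P mu D) (at_right 0) (Rbar_locally p_infty) v.

(* Main.v *)
Require Import Defs.
From Stdlib Require Import Reals Lra Classical.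
From Coquelicot Require Import Coquelicot.
Open Scope R_scope.

Lemma exR_pos (f : R -> R) x y : (forall z, 0 < z -> continuous f z) -> 0 < x -> 0 < y -> ex_RInt f x y.
Proof.
  intros Hc Hx Hy. apply (@ex_RInt_continuous R_CompleteNormedModule). intros z Hz. apply Hc.
  assert (0 < Rmin x y) by (apply Rmin_glb_lt; lra). lra.
Qed.

Lemma at_right_pos (d : R) : 0 < d -> at_right 0 (fun x => 0 < x < d).
Proof.
  intros Hd. exists (mkposreal d Hd). intros x Hx Hpos. simpl in *.
  unfold ball in Hx; simpl in Hx; unfold AbsRing_ball, abs, minus, plus, opp in Hx; simpl in Hx.
  rewrite Ropp_0, Rplus_0_r in Hx. apply Rabs_lt_between in Hx. lra.
Qed.

Lemma gen_of (f : R -> R) l : (forall z, 0 < z -> continuous f z) ->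
  filterlim (fun p => RInt f (fst p) (snd p)) (filter_prod (at_right 0) (Rbar_locally p_infty)) (locally l) ->
  is_RInt_gen f (at_right 0) (Rbar_locally p_infty) l.
Proof.
  intros Hc Hl. apply (filterlimi_lim_ext_loc (fun p => RInt f (fst p) (snd p))); [|exact Hl].
  apply (Filter_prod _ _ _ (fun x => 0 < x < 1) (fun y => 0 < y)).
  + apply at_right_pos; lra.
  + exists 0; auto.
  + intros x y Hx Hy. simpl. apply (@RInt_correct R_CompleteNormedModule). apply exR_pos; auto; lra.
Qed.

Lemma mono_gen (f : R -> R) B : (forall x, 0 < x -> continuous f x) -> (forall x, 0 < x -> 0 <= f x) ->
  (forall x y, 0 < x -> x <= y -> RInt f x y <= B) ->
  exists L, is_RInt_gen f (at_right 0) (Rbar_locally p_infty) L /\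
    (forall x y, 0 < x -> x <= y -> RInt f x y <= L).
Proof.
  intros Hc Hp HB.
  set (E := fun r => exists x y, 0 < x /\ x <= y /\ r = RInt f x y).
  assert (Hb : bound E) by (exists B; intros r (x & y & Hx & Hxy & ->); auto).
  assert (Hne : exists r, E r) by (exists (RInt f 1 1), 1, 1; repeat split; try lra; nra).
  destruct (completeness E Hb Hne) as [L [Hub Hlub]].
  exists L. split.
  2: { intros x y Hx Hxy. apply Hub. exists x, y; auto. }
  apply gen_of; auto.
  - apply (proj2 (filterlim_locally _ _)). intros eps. assert (He := cond_pos eps).
    assert (Hex : exists r, E r /\ L - eps < r).
    { apply NNPP. intros Hn. assert (L <= L - eps); [|lra].
      apply Hlub. intros r Hr. apply Rnot_lt_le. intros Hlt. apply Hn. exists r; auto. }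
    destruct Hex as [r [(x0 & y0 & Hx0 & Hxy0 & ->) Hr]].
    apply (Filter_prod _ _ _ (fun x => 0 < x < x0) (fun y => y0 < y)).
    + apply at_right_pos; lra.
    + exists y0; auto.
    + intros x y [Hx Hxx] Hy. simpl.
      unfold ball; simpl; unfold AbsRing_ball, abs, minus, plus, opp; simpl.
      assert (Hup : RInt f x y <= L) by (apply Hub; exists x, y; repeat split; try lra; nra).
      rewrite <- (RInt_Chasles f x x0 y) by (apply exR_pos; auto; lra).
      rewrite <- (RInt_Chasles f x0 y0 y) by (apply exR_pos; auto; lra).
      assert (0 <= RInt f x x0) by (apply RInt_ge_0; [lra|apply exR_pos; auto; lra|intros; apply Hp; lra]).
      assert (0 <= RInt f y0 y) by (apply RInt_ge_0; [lra|apply exR_pos; auto; lra|intros; apply Hp; lra]).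
      rewrite <- (RInt_Chasles f x x0 y), <- (RInt_Chasles f x0 y0 y) in Hup
        by (apply exR_pos; auto; lra).
      unfold plus in *; simpl in *.
      apply Rabs_def1; lra.
Qed.
Lemma lim_lin (If : R*R -> R) l K : 0 <= K ->
  (forall x y, 0 < x -> 1 < y -> Rabs (If (x,y) - l) <= K*x + K/y) ->
  filterlim If (filter_prod (at_right 0) (Rbar_locally p_infty)) (locally l).
Proof.
  intros HK H. apply filterlim_locally. intros eps.
  assert (He := cond_pos eps).
  set (d := eps/(2*(K+1))).
  assert (Hd : 0 < d) by (unfold d; apply Rdiv_lt_0_compat; lra).
  apply (Filter_prod _ _ _ (fun x => 0 < x < d) (fun y => Rmax 1 (2*(K+1)/eps) < y)).
  - exists (mkposreal d Hd). intros x Hx Hpos. simpl in *.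
    unfold ball in Hx; simpl in Hx; unfold AbsRing_ball, abs, minus, plus, opp in Hx; simpl in Hx.
    rewrite Ropp_0, Rplus_0_r in Hx. apply Rabs_lt_between in Hx. lra.
  - exists (Rmax 1 (2*(K+1)/eps)). auto.
  - intros x y [Hx0 Hxd] Hy. unfold ball; simpl; unfold AbsRing_ball, abs, minus, plus, opp; simpl.
    assert (Hy1 : 1 < y) by (eapply Rle_lt_trans; [apply Rmax_l|exact Hy]).
    assert (Hy2 : 2*(K+1)/eps < y) by (eapply Rle_lt_trans; [apply Rmax_r|exact Hy]).
    specialize (H x y Hx0 Hy1).
    assert (H1 : K * x <= K * d) by (apply Rmult_le_compat_l; lra).
    assert (H2 : K * d < eps/2).
    { unfold d. unfold Rdiv. rewrite Rinv_mult.
      assert (0 < / (K+1)) by (apply Rinv_0_lt_compat; lra).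
      assert (K * / (K+1) < 1).
      { apply (Rmult_lt_reg_r (K+1)); [lra|]. rewrite Rmult_assoc, Rinv_l by lra. lra. }
      nra. }
    assert (H3 : K / y <= K * d).
    { unfold Rdiv. apply Rmult_le_compat_l; [lra|].
      unfold d. rewrite <- (Rinv_div (2*(K+1)) eps). apply Rinv_le_contravar.
      apply Rdiv_lt_0_compat; lra. unfold Rdiv in *. lra. }
    replace (If (x,y) + - l) with (If (x,y) - l) by ring. lra.
Qed.

Lemma cont_of (f : R -> R) x : ex_derive f x -> continuous f x.
Proof. apply (@ex_derive_continuous R_AbsRing R_NormedModule). Qed.

Definition hf (u : R) : R := exp (- u) / u.
Definition Gf (al be t : R) : R := RInt hf (al * t) (be * t).
Definition fr (al be g : R) : R := (exp (- (al * g)) - exp (- (be * g))) / g.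

Lemma hf_cont z : 0 < z -> continuous hf z.
Proof. intros Hz. apply cont_of. unfold hf. auto_derive. lra. Qed.

Lemma inv_int p q : 0 < p -> 0 < q -> RInt (fun u => / u) p q = ln q - ln p.
Proof.
  intros Hp Hq. apply is_RInt_unique.
  assert (0 < Rmin p q) by (apply Rmin_glb_lt; lra).
  apply (@is_RInt_derive R_CompleteNormedModule ln (fun u => / u)).
  - intros x Hx. apply is_derive_ln. lra.
  - intros x Hx. apply cont_of. auto_derive. lra.
Qed.

Lemma Gbounds al be t : 0 < al -> al < be -> 0 < t ->
  exp (- (be * t)) * ln (be / al) <= Gf al be t <= exp (- (al * t)) * ln (be / al).
Proof.
  intros Ha Hab Ht.
  assert (Hl : ln (be / al) = RInt (fun u => / u) (al * t) (be * t)).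
  { rewrite inv_int by nra. rewrite !ln_mult by lra. rewrite ln_div by lra. ring. }
  assert (Hex : ex_RInt (fun u => / u) (al * t) (be * t)).
  { apply exR_pos; try nra. intros z Hz. apply cont_of. auto_derive. lra. }
  assert (Hexh : ex_RInt hf (al * t) (be * t)) by (apply exR_pos; [exact hf_cont|nra|nra]).
  rewrite Hl. unfold Gf.
  assert (E : forall k, RInt (fun u => k * / u) (al * t) (be * t) = k * RInt (fun u => / u) (al * t) (be * t)).
  { intros k. exact (RInt_scal (V:=R_CompleteNormedModule) (fun u => / u) _ _ k Hex). }
  rewrite <- !E.
  split; apply RInt_le; try nra; auto.
  - apply (ex_RInt_scal (V:=R_CompleteNormedModule) (fun u => / u)); auto.
  - intros x Hx. unfold hf, Rdiv.
    apply Rmult_le_compat_r. apply Rlt_le, Rinv_0_lt_compat; nra.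
    apply Rlt_le, exp_increasing; lra.
  - apply (ex_RInt_scal (V:=R_CompleteNormedModule) (fun u => / u)); auto.
  - intros x Hx. unfold hf, Rdiv.
    apply Rmult_le_compat_r. apply Rlt_le, Rinv_0_lt_compat; nra.
    apply Rlt_le, exp_increasing; lra.
Qed.

Lemma exh a b : 0 < a -> 0 < b -> ex_RInt hf a b.
Proof. intros; apply exR_pos; auto; exact hf_cont. Qed.

Lemma exk k a b : 0 < a -> 0 < b -> ex_RInt (fun g => exp (- (k * g)) / g) a b.
Proof. intros; apply exR_pos; auto. intros z Hz; apply cont_of; auto_derive; lra. Qed.

Lemma comp_hf k x y : 0 < k -> 0 < x -> 0 < y ->
  RInt (fun g => exp (- (k * g)) / g) x y = RInt hf (k * x) (k * y).
Proof.
  intros Hk Hx Hy.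
  assert (H := RInt_comp_lin (V:=R_CompleteNormedModule) hf k 0 x y).
  rewrite !Rplus_0_r in H. rewrite <- H by (apply exh; nra).
  apply RInt_ext. intros z Hz.
  assert (0 < Rmin x y) by (apply Rmin_glb_lt; lra).
  unfold scal; simpl; unfold mult; simpl; unfold hf. rewrite Rplus_0_r. field. split; nra.
Qed.

Lemma RInt_fr al be x y : 0 < al -> 0 < be -> 0 < x -> 0 < y ->
  RInt (fr al be) x y = Gf al be x - Gf al be y.
Proof.
  intros Ha Hb Hx Hy.
  transitivity (RInt (fun g => minus (exp (- (al * g)) / g) (exp (- (be * g)) / g)) x y).
  { apply RInt_ext. intros z Hz.
    assert (0 < Rmin x y) by (apply Rmin_glb_lt; lra).
    unfold fr, minus, plus, opp; simpl. field. lra. }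
  rewrite (RInt_minus (V:=R_CompleteNormedModule)) by (apply exk; auto).
  rewrite !comp_hf by auto. unfold Gf.
  rewrite <- (RInt_Chasles (V:=R_CompleteNormedModule) hf (al*x) (be*x) (al*y)) by (apply exh; nra).
  rewrite <- (RInt_Chasles (V:=R_CompleteNormedModule) hf (be*x) (al*y) (be*y)) by (apply exh; nra).
  unfold minus, plus, opp; simpl. ring.
Qed.

Lemma fr_gen al be : 0 < al -> al < be ->
  is_RInt_gen (fr al be) (at_right 0) (Rbar_locally p_infty) (ln (be / al)).
Proof.
  intros Ha Hab.
  assert (HL : 0 <= ln (be / al)).
  { rewrite <- ln_1. apply Rlt_le, ln_increasing; [lra|].
    apply (Rmult_lt_reg_r al); auto. unfold Rdiv. rewrite Rmult_assoc, Rinv_l; lra. }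
  set (L := ln (be / al)) in *.
  apply gen_of.
  { intros z Hz. apply cont_of. unfold fr. auto_derive. lra. }
  apply (lim_lin _ _ (be * L + L / al)).
  { assert (0 <= L / al) by (apply Rdiv_le_0_compat; lra). nra. }
  intros x y Hx Hy. simpl. rewrite RInt_fr by lra.
  destruct (Gbounds al be x) as [G1 G2]; try lra.
  destruct (Gbounds al be y) as [G3 G4]; try lra.
  fold L in G1, G2, G3, G4.
  assert (E1 : 1 - be * x <= exp (- (be * x))) by (generalize (exp_ineq1_le (- (be * x))); lra).
  assert (E2 : exp (- (al * x)) <= 1).
  { rewrite <- exp_0. destruct (Req_dec (al*x) 0); [nra|]. apply Rlt_le, exp_increasing. nra. }
  assert (E3 : exp (- (al * y)) <= / (al * y)).
  { rewrite exp_Ropp. apply Rinv_le_contravar. nra. generalize (exp_ineq1_le (al * y)); lra. }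
  assert (E4 : 0 <= exp (- (be * y))) by (apply Rlt_le, exp_pos).
  assert (E5 : exp (- (al * y)) * L <= (L / al) / y).
  { replace (L / al / y) with (/ (al * y) * L) by (field; lra). apply Rmult_le_compat_r; lra. }
  assert (E6 : 0 <= (be * L) / y) by (apply Rdiv_le_0_compat; nra).
  assert (E7 : 0 <= (L / al) * x) by (apply Rmult_le_pos; [apply Rdiv_le_0_compat|]; lra).
  replace ((be * L + L / al) / y) with ((be * L) / y + (L/al)/y) by (field; lra).
  apply Rabs_le. split; nra.
Qed.

Lemma fr_bound al be x y : 0 < al -> al < be -> 0 < x -> 0 < y ->
  RInt (fr al be) x y <= ln (be / al).
Proof.
  intros Ha Hab Hx Hy. rewrite RInt_fr by lra.
  destruct (Gbounds al be x) as [G1 G2]; try lra.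
  destruct (Gbounds al be y) as [G3 G4]; try lra.
  assert (HL : 0 <= ln (be / al)).
  { rewrite <- ln_1. apply Rlt_le, ln_increasing; [lra|].
    apply (Rmult_lt_reg_r al); auto. unfold Rdiv. rewrite Rmult_assoc, Rinv_l; lra. }
  assert (E2 : exp (- (al * x)) <= 1).
  { rewrite <- exp_0. destruct (Req_dec (al*x) 0); [nra|]. apply Rlt_le, exp_increasing. nra. }
  assert (E4 : 0 <= exp (- (be * y))) by (apply Rlt_le, exp_pos).
  nra.
Qed.

Lemma gen_ext_pos (f g : R -> R) l : (forall x, 0 < x -> f x = g x) ->
  is_RInt_gen f (at_right 0) (Rbar_locally p_infty) l ->
  is_RInt_gen g (at_right 0) (Rbar_locally p_infty) l.
Proof.
  intros He. apply is_RInt_gen_ext.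
  apply (Filter_prod _ _ _ (fun x => 0 < x < 1) (fun y => 0 < y)).
  + apply at_right_pos; lra.
  + exists 0; auto.
  + intros x y Hx Hy z Hz. simpl in Hz. apply He.
    assert (0 < Rmin x y) by (apply Rmin_glb_lt; lra). lra.
Qed.

Definition mden (mu g : R) : R := 1 / mu * exp (- g / mu).

Lemma mden_gen mu : 0 < mu -> is_RInt_gen (mden mu) (at_right 0) (Rbar_locally p_infty) 1.
Proof.
  intros Hmu. apply gen_of.
  { intros z Hz. apply cont_of. unfold mden. auto_derive. auto. }
  apply (lim_lin _ _ (1 / mu + mu)).
  { assert (0 < 1/mu) by (apply Rdiv_lt_0_compat; lra). lra. }
  intros x y Hx Hy. simpl.
  assert (Hi : RInt (mden mu) x y = exp (- x / mu) - exp (- y / mu)).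
  { apply is_RInt_unique.
    replace (exp (- x / mu) - exp (- y / mu)) with
      (minus ((fun g => - exp (- g / mu)) y) ((fun g => - exp (- g / mu)) x))
      by (unfold minus, plus, opp; simpl; ring).
    apply (@is_RInt_derive R_CompleteNormedModule (fun g => - exp (- g / mu)) (mden mu)).
    - intros z Hz. auto_derive; auto. unfold mden, Rdiv. ring.
    - intros z Hz. apply cont_of. unfold mden. auto_derive. auto. }
  rewrite Hi.
  assert (E1 : 1 - x / mu <= exp (- x / mu)).
  { generalize (exp_ineq1_le (- x / mu)). unfold Rdiv. lra. }
  assert (E2 : exp (- x / mu) <= 1).
  { rewrite <- exp_0. apply Rlt_le, exp_increasing.
    assert (0 < x / mu) by (apply Rdiv_lt_0_compat; lra). unfold Rdiv in *. lra. }
  assert (E3 : exp (- y / mu) <= mu / y).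
  { rewrite <- (Rinv_div y mu). unfold Rdiv. rewrite Ropp_mult_distr_l_reverse, exp_Ropp. apply Rinv_le_contravar.
    apply Rmult_lt_0_compat; [lra|apply Rinv_0_lt_compat; lra].
    generalize (exp_ineq1_le (y * / mu)); lra. }
  assert (E4 : 0 < exp (- y / mu)) by apply exp_pos.
  assert (E5 : 0 <= x / mu) by (apply Rdiv_le_0_compat; lra).
  assert (E6 : 0 <= mu * x) by nra.
  assert (E7 : 0 <= (1/mu) / y) by (apply Rdiv_le_0_compat; [apply Rdiv_le_0_compat|]; lra).
  replace ((1 / mu + mu) * x) with (x / mu + mu * x) by (field; lra).
  replace ((1 / mu + mu) / y) with ((1/mu)/y + mu / y) by (field; lra).
  apply Rabs_le. split; lra.
Qed.

Definition hD (a b c P mu : R) (D : R -> R) (g : R) : R :=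
  a * b / (g * P) * Rpower (D g) (- c / b) * (exp (g * P / (a * (b + c))) - 1) * mden mu g.

Lemma exp_gt1 u : 0 < u -> 1 < exp u.
Proof. intros; rewrite <- exp_0; apply exp_increasing; lra. Qed.

Section Main.
Variables a b c P mu : R.
Hypotheses (ha : 0 < a) (hb : 0 < b) (hc : 0 < c) (hP : 0 < P) (hmu : 0 < mu).

Lemma uv_pos g : 0 < g -> 0 < g * P / (a * (b + c)) < g * P / (a * c).
Proof.
  intros Hg. split.
  - apply Rdiv_lt_0_compat; nra.
  - unfold Rdiv. apply Rmult_lt_compat_l; [nra|]. apply Rinv_lt_contravar; [apply Rmult_lt_0_compat; apply Rmult_lt_0_compat; lra|nra].
Qed.

Lemma hat_eq g : Delta_hat a b c P g = exp (g * P / (a * c) - g * P / (a * (b + c))).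
Proof. unfold Delta_hat, lam_a, lamt_a. f_equal. field. repeat split; try lra; nra. Qed.

Lemma delta_gt g : 0 < g -> DeltaF a b c P g > Delta_hat a b c P g.
Proof.
  intros Hg. destruct (uv_pos g Hg) as [Hv Hvu].
  rewrite hat_eq. unfold DeltaF, lam_a, lamt_a.
  set (u := g * P / (a * c)) in *. set (v := g * P / (a * (b + c))) in *.
  assert (H1 := exp_gt1 v Hv). assert (H2 := exp_gt1 (u - v) ltac:(lra)).
  apply Rlt_gt. apply (Rmult_lt_reg_r (exp v - 1)); [lra|].
  unfold Rdiv. rewrite Rmult_assoc, Rinv_l, Rmult_1_r by lra.
  rewrite Rmult_minus_distr_l, <- exp_plus. replace (u - v + v) with u by ring. lra.
Qed.

Lemma delta_pos g : 0 < g -> 0 < DeltaF a b c P g.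
Proof.
  intros Hg. apply Rlt_trans with (Delta_hat a b c P g).
  unfold Delta_hat; apply exp_pos. apply delta_gt; auto.
Qed.

Definition al := 1 / mu.
Definition be := 1 / mu + P / (a * (b + c)).
Definition CC := a * b / (P * mu).

Lemma hat_fr g : 0 < g -> hD a b c P mu (Delta_hat a b c P) g = CC * fr al be g.
Proof.
  intros Hg. unfold hD, Rpower, CC, fr, al, be, mden.
  rewrite hat_eq, ln_exp.
  set (v := g * P / (a * (b + c))).
  replace (- c / b * (g * P / (a * c) - v)) with (- v) by (unfold v; field; repeat split; try lra; nra).
  replace (- ((1 / mu + P / (a * (b + c))) * g)) with (- v + - g / mu) by (unfold v; field; repeat split; try lra; nra).
  replace (- (1 / mu * g)) with (- g / mu) by (field; lra).
  rewrite exp_plus. rewrite exp_Ropp.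
  assert (0 < exp v) by apply exp_pos.
  field. repeat split; try lra; nra.
Qed.

Lemma hD_pos D g : 0 < g -> 0 <= hD a b c P mu D g.
Proof.
  intros Hg. destruct (uv_pos g Hg) as [Hv _].
  unfold hD, Rpower, mden.
  assert (0 < a * b / (g * P)) by (apply Rdiv_lt_0_compat; nra).
  assert (H1 := exp_gt1 _ Hv).
  assert (0 < exp (- c / b * ln (D g))) by apply exp_pos.
  assert (0 < 1 / mu) by (apply Rdiv_lt_0_compat; lra).
  assert (0 < exp (- g / mu)) by apply exp_pos.
  apply Rlt_le. apply Rmult_lt_0_compat; [apply Rmult_lt_0_compat; [apply Rmult_lt_0_compat|]|]; try lra. apply Rmult_lt_0_compat; lra.
Qed.

Lemma hD_lt g : 0 < g -> hD a b c P mu (DeltaF a b c P) g < hD a b c P mu (Delta_hat a b c P) g.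
Proof.
  intros Hg. destruct (uv_pos g Hg) as [Hv _].
  unfold hD, mden.
  assert (0 < a * b / (g * P)) by (apply Rdiv_lt_0_compat; nra).
  assert (H1 := exp_gt1 _ Hv).
  assert (0 < 1 / mu) by (apply Rdiv_lt_0_compat; lra).
  assert (0 < exp (- g / mu)) by apply exp_pos.
  assert (Hr : Rpower (DeltaF a b c P g) (- c / b) < Rpower (Delta_hat a b c P g) (- c / b)).
  { unfold Rpower. apply exp_increasing.
    assert (Hl : ln (Delta_hat a b c P g) < ln (DeltaF a b c P g)).
    { apply ln_increasing. unfold Delta_hat; apply exp_pos. apply delta_gt; auto. }
    assert (0 < c / b) by (apply Rdiv_lt_0_compat; lra).
    unfold Rdiv in *. rewrite Ropp_mult_distr_l_reverse. nra. }
  set (K1 := a * b / (g * P)) in *.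
  set (K2 := exp (g * P / (a * (b + c))) - 1).
  set (K3 := 1 / mu * exp (- g / mu)).
  assert (0 < K2) by (unfold K2; lra).
  assert (0 < K3) by (unfold K3; apply Rmult_lt_0_compat; lra).
  apply Rmult_lt_compat_r; auto. apply Rmult_lt_compat_r; auto.
  apply Rmult_lt_compat_l; auto.
Qed.

End Main.

Lemma gen_val (f : R -> R) (l l' : R) : is_RInt_gen f (at_right 0) (Rbar_locally p_infty) l -> l = l' ->
  is_RInt_gen f (at_right 0) (Rbar_locally p_infty) l'.
Proof. intros H ->; exact H. Qed.

Lemma minusR (x y : R) : minus x y = x - y.
Proof. reflexivity. Qed.

Theorem mainTheorem4 (a b c P mu : R)
  (ha : 0 < a) (hb : 0 < b) (hc : 0 < c) (hP : 0 < P) (hmu : 0 < mu) :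
  (forall g : R, 0 < g -> DeltaF a b c P g > Delta_hat a b c P g) /\
  J_is a b c P mu (Delta_hat a b c P)
       (1 + a * b / (P * mu) * ln (a * (b + c) / (a * (b + c) + P * mu))) /\
  (exists v : R, J_is a b c P mu (DeltaF a b c P) v /\
       1 + a * b / (P * mu) * ln (a * (b + c) / (a * (b + c) + P * mu)) < v).
Proof.
  split; [intros; apply delta_gt; auto|].
  assert (Hal : 0 < al mu) by (unfold al; apply Rdiv_lt_0_compat; lra).
  assert (Hab : al mu < be a b c P mu).
  { unfold al, be. assert (0 < P / (a * (b + c))) by (apply Rdiv_lt_0_compat; nra). lra. }
  assert (HC : 0 < CC a b P mu) by (unfold CC; apply Rdiv_lt_0_compat; nra).
  set (L := ln (be a b c P mu / al mu)).
  assert (HL : ln (a * (b + c) / (a * (b + c) + P * mu)) = - L).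
  { unfold L, al, be. replace ((1 / mu + P / (a * (b + c))) / (1 / mu)) with
      ((a * (b + c) + P * mu) / (a * (b + c))) by (field; repeat split; try lra; nra).
    rewrite !ln_div by nra. ring. }
  rewrite HL. fold (CC a b P mu).
  assert (Hfr := fr_gen _ _ Hal Hab). fold L in Hfr.
  assert (Hcf : is_RInt_gen (fun g => CC a b P mu * fr (al mu) (be a b c P mu) g)
                  (at_right 0) (Rbar_locally p_infty) (CC a b P mu * L)).
  { exact (is_RInt_gen_scal _ (CC a b P mu) _ Hfr). }
  assert (Hm := mden_gen mu hmu).
  split.
  - unfold J_is.
    apply (gen_val _ (minus 1 (CC a b P mu * L))); [|rewrite minusR; ring].
    apply (gen_ext_pos (fun y => minus (mden mu y) (CC a b P mu * fr (al mu) (be a b c P mu) y))).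
    + intros g Hg. rewrite minusR. rewrite <- hat_fr by auto.
      unfold J_integrand, hD, mden.
      set (X := Rpower (Delta_hat a b c P g) (- c / b)). set (Y := exp (g * P / (a * (b + c)))). set (Z := exp (- g / mu)).
      ring.
    + exact (is_RInt_gen_minus _ _ _ _ Hm Hcf).
  - set (d := fun g => CC a b P mu * fr (al mu) (be a b c P mu) g - hD a b c P mu (DeltaF a b c P) g).
    assert (Hdp : forall g, 0 < g -> 0 < d g).
    { intros g Hg. unfold d. rewrite <- hat_fr by auto. generalize (hD_lt a b c P mu ha hb hc hP hmu g Hg). lra. }
    assert (Hdle : forall g, 0 < g -> d g <= CC a b P mu * fr (al mu) (be a b c P mu) g).
    { intros g Hg. unfold d. generalize (hD_pos a b c P mu ha hb hc hP hmu (DeltaF a b c P) g Hg). lra. }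
    assert (Hdc : forall g, 0 < g -> continuous d g).
    { intros g Hg. destruct (uv_pos a b c P ha hb hc hP g Hg) as [Hv Hvu].
      assert (Hd := delta_pos a b c P ha hb hc hP g Hg).
      assert (H1 := exp_gt1 _ Hv).
      apply cont_of. unfold d, CC, fr, al, be, hD, mden, Rpower.
      unfold DeltaF, lam_a, lamt_a in *. unfold Rdiv in *.
      auto_derive. split; [lra|]. split; [apply Rmult_integral_contrapositive; split; lra|]. split; [lra|]. split; [unfold Rminus in Hd; exact Hd|exact I]. }
    assert (Hfc : forall g, 0 < g -> continuous (fun g => CC a b P mu * fr (al mu) (be a b c P mu) g) g).
    { intros g Hg. apply cont_of. unfold fr. auto_derive. lra. }
    destruct (mono_gen d (CC a b P mu * L)) as [Ld [HLd HLb]]; [exact Hdc| | |].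
    { intros; apply Rlt_le; auto. }
    { intros x y Hx Hxy.
      apply Rle_trans with (RInt (fun g => CC a b P mu * fr (al mu) (be a b c P mu) g) x y).
      - apply RInt_le; auto.
        + apply exR_pos; auto; lra.
        + apply exR_pos; auto; lra.
        + intros; apply Hdle; lra.
      - rewrite (RInt_scal (V:=R_CompleteNormedModule) (fr (al mu) (be a b c P mu))).
        + apply Rmult_le_compat_l; [lra|]. apply fr_bound; auto; lra.
        + apply exR_pos; try lra. intros z Hz. apply cont_of. unfold fr. auto_derive. lra. }
    assert (HLd0 : 0 < Ld).
    { apply Rlt_le_trans with (RInt d 1 2); [|apply HLb; lra].
      apply RInt_gt_0; [lra| |]; intros; [apply Hdp|apply Hdc]; lra. }
    exists (minus 1 (minus (CC a b P mu * L) Ld)). split.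
    + unfold J_is.
      apply (gen_ext_pos (fun y => minus (mden mu y)
              (minus (CC a b P mu * fr (al mu) (be a b c P mu) y) (d y)))).
      * intros g Hg. rewrite !minusR. unfold d, J_integrand, hD, mden.
        set (W := CC a b P mu * fr (al mu) (be a b c P mu) g).
        set (X := Rpower (DeltaF a b c P g) (- c / b)). set (Y := exp (g * P / (a * (b + c)))). set (Z := exp (- g / mu)).
        unfold minus, plus, opp; simpl. ring.
      * exact (is_RInt_gen_minus _ _ _ _ Hm (is_RInt_gen_minus _ _ _ _ Hcf HLd)).
    + unfold minus, plus, opp; simpl. lra.
Qed.
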